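(* Under the Lyapunov condition with exponent $\delta>0$, set $s=2+\delta$ and for $n\in\mathbb{N}$, $j\in\{0,\ldots,n-1\}$ define \[ \widetilde{\xi}^{(n)}_j=\xi_j\mathbf{1}\{|\xi_j|\le n^{1/s}\}-\mathbb{E}\big[\xi_j\mathbf{1}\{|\xi_j|\le n^{1/s}\}\big],\qquad \widetilde{\lambda}^{(n)}_k=\sum_{j=0}^{n-1}\widetilde{\xi}^{(n)}_j\omega_n^{kj}\quad (1\le k\le n-1). \] Then \[ \mathbb{P}\Big(\lim_{n\to\infty}\max_{1\le k\le n-1}\big||\lambda^{(n)}_k|-|\widetilde{\lambda}^{(n)}_k|\big|=0\Big)=1. \]
   Context: Lyapunov condition: $(\xi_j)_{j\in\mathbb{N}_0}$ is a sequence of i.i.d. non-degenerate real random variables on a probability space $(\Omega,\mathcal{F},\mathbb{P})$ with $\mathbb{E}[\xi_0]=0$, $\mathbb{E}[\xi_0^2]=1$, and there is $\delta>0$ with $\mathbb{E}[|\xi_0|^{2+\delta}]<\infty$. With $\omega_n=\exp(2\pi\mathsf{i}/n)$, $\lambda^{(n)}_k=\sum_{j=0}^{n-1}\xi_j\omega_n^{kj}$. *)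

(* Defs.v *)
From HB Require Import structures.
From mathcomp Require Import all_boot all_order all_algebra.
From mathcomp Require Import all_classical all_reals all_analysis.
Set Implicit Arguments. Unset Strict Implicit. Unset Printing Implicit Defensive.
Import Order.TTheory GRing.Theory Num.Theory.
Import numFieldNormedType.Exports.
Local Open Scope classical_set_scope.
Local Open Scope ring_scope.

Definition mutually_independent {d} {T : measurableType d} {R : realType}
  (P : probability T R) (X : nat -> T -> R) : Prop :=
  forall (J : seq nat) (B : nat -> set R), uniq J ->
    (forall j, j \in J -> measurable (B j)) ->
    P (\big[setI/setT]_(j <- J) (X j @^-1` B j)) =
    (\prod_(j <- J) P (X j @^-1` B j))%E.

Definition identically_distributed {d} {T : measurableType d} {R : realType}
  (P : probability T R) (X : nat -> T -> R) : Prop :=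
  forall (j : nat) (B : set R), measurable B ->
    P (X j @^-1` B) = P (X 0%N @^-1` B).

Definition non_degenerate {d} {T : measurableType d} {R : realType}
  (P : probability T R) (Y : T -> R) : Prop :=
  ~ exists c : R, P [set w | Y w = c] = 1%E.

(* Modulus of the complex number sum_{j<n} x_j * omega_n^{k j}, where
   omega_n = exp(2 pi i / n), written via real and imaginary parts:
   omega_n^{kj} = cos(2 pi k j / n) + i sin(2 pi k j / n). *)
Definition dft_abs {R : realType} (n k : nat) (x : nat -> R) : R :=
  Num.sqrt ((\sum_(j < n) x j * cos (2 * pi * (k * j)%:R / n%:R)) ^+ 2 +
            (\sum_(j < n) x j * sin (2 * pi * (k * j)%:R / n%:R)) ^+ 2).

Definition trunc_var {d} {T : measurableType d} {R : realType}
  (Y : T -> R) (n : nat) (s : R) : T -> R :=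
  fun w => if `|Y w| <= (n%:R) `^ (s^-1) then Y w else 0.

Definition xi_tilde {d} {T : measurableType d} {R : realType}
  (P : probability T R) (X : nat -> T -> R) (s : R) (n j : nat) : T -> R :=
  fun w => trunc_var (X j) n s w - fine ('E_P[trunc_var (X j) n s])%E.

(* max_{1 <= k <= n-1} | |lambda^{(n)}_k| - |lambda~^{(n)}_k| |  (0 if n <= 1) *)
Definition max_dev {d} {T : measurableType d} {R : realType}
  (P : probability T R) (X : nat -> T -> R) (s : R) (n : nat) (w : T) : R :=
  \big[Num.max/0]_(1 <= k < n)
     `| dft_abs n k (fun j => X j w) - dft_abs n k (fun j => xi_tilde P X s n j w) |.

(* Main.v *)
Require Import Defs.
From HB Require Import structures.
From mathcomp Require Import all_boot all_order all_algebra.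
From mathcomp Require Import all_classical all_reals all_analysis.
From mathcomp Require Import ring lra measurable_realfun.
Import Order.TTheory GRing.Theory Num.Theory.
Import numFieldNormedType.Exports.
Local Open Scope classical_set_scope.
Local Open Scope ring_scope.

Lemma trig_sums (R : realType) (n k : nat) : (0 < k)%N -> (k < n)%N ->
  \sum_(j < n) cos (2 * pi * (k * j)%:R / n%:R) = 0 :> R /\
  \sum_(j < n) sin (2 * pi * (k * j)%:R / n%:R) = 0 :> R.
Proof.
move=> k0 kn.
have n0 : (n%:R : R) != 0 by rewrite pnatr_eq0 -lt0n (leq_trans k0 (ltnW kn)).
have n0' : (0 : R) < n%:R by rewrite ltr0n (leq_trans k0 (ltnW kn)).
set b : R := pi * k%:R / n%:R.
set x : nat -> R := fun j => 2 * pi * (k * j)%:R / n%:R.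
have hx j : x j.+1 - b = x j + b.
  by rewrite /x /b mulnS natrD; field.
have hxn : x n - b = - b + (pi *+ 2) *+ k.
  by rewrite /x natrM -mulrnA mulr_natr; field.
have hx0 : x 0%N = 0 by rewrite /x muln0 mulr0 mul0r.
have sb : 0 < sin b.
  apply: sin_gt0_pi; apply/andP; split.
    by rewrite /b divr_gt0 // mulr_gt0 // ?pi_gt0 // ltr0n.
  rewrite /b -mulrA gtr_pMr ?pi_gt0 // ltr_pdivrMr // mul1r ltr_nat //.
have sb0 : sin b * 2 != 0 by rewrite mulf_eq0 negb_or (gt_eqF sb) pnatr_eq0.
have fin c : c * \sum_(j < n) cos (x j) = 0 -> c != 0 -> \sum_(j < n) cos (x j) = 0.
  by move=> /eqP; rewrite mulf_eq0 => /orP[/eqP->|/eqP->//]; rewrite eqxx.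
have fin' c : c * \sum_(j < n) sin (x j) = 0 -> c != 0 -> \sum_(j < n) sin (x j) = 0.
  by move=> /eqP; rewrite mulf_eq0 => /orP[/eqP->|/eqP->//]; rewrite eqxx.
split.
- apply: (fin (sin b * 2)) => //.
  rewrite mulr_sumr.
  rewrite (eq_bigr (fun j : 'I_n => sin (x (val j).+1 - b) - sin (x (val j) - b))); last first.
    move=> j _; rewrite hx sinD sinB; ring.
  rewrite -(big_mkord xpredT (fun j => sin (x j.+1 - b) - sin (x j - b))).
  rewrite (telescope_sumr (fun j => sin (x j - b))) //.
  by rewrite hxn periodicn ?hx0 ?add0r ?subrr //; exact: sinD2pi.
- apply: (fin' (sin b * 2)) => //.
  rewrite mulr_sumr.
  rewrite (eq_bigr (fun j : 'I_n => - cos (x (val j).+1 - b) - - cos (x (val j) - b))); last first.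
    move=> j _; rewrite hx cosD cosB; ring.
  rewrite -(big_mkord xpredT (fun j => - cos (x j.+1 - b) - - cos (x j - b))).
  rewrite (telescope_sumr (fun j => - cos (x j - b))) //.
  by rewrite hxn periodicn ?hx0 ?add0r ?subrr //; exact: cosD2pi.
Qed.

Lemma count_le (R : realType) (U : Type) (x : U) (y : R) (N : nat) (P : nat -> set U) :
  (forall j, P j x -> j.+1%:R < y) -> 0 <= y ->
  \sum_(j < N) \1_(P j) x <= y.
Proof.
move=> HP y0.
suff : \sum_(j < N) \1_(P j) x <= y /\ \sum_(j < N) \1_(P j) x <= N%:R :> R by case.
elim: N => [|N [IH1 IH2]]; first by rewrite big_ord0.
rewrite big_ord_recr /= indicE.
case: (pselect (P N x)) => H.
- rewrite mem_set // -natr1; split; last by rewrite lerD2r.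
  by apply: le_trans (ltW (HP _ H)); rewrite -natr1 lerD2r.
- rewrite memNset // addr0; split => //.
  by apply: (le_trans IH2); rewrite ler_nat.
Qed.

Lemma exp_trunc d (T : measurableType d) (R : realType) (P : probability T R)
  (X : nat -> T -> R) : (forall j, measurable_fun setT (X j)) ->
  identically_distributed P X -> forall (n : nat) (s : R) (i : nat),
  ('E_P[trunc_var (X i) n s] = 'E_P[trunc_var (X 0%N) n s])%E.
Proof.
move=> mX iid n s i.
set c := n%:R `^ s^-1.
set g : R -> R := fun x => x * \1_[set y | `|y| <= c] x.
have mA : measurable [set y : R | `|y| <= c].
  have := @measurable_realfun.normr_measurable R setT measurableT _ (measurable_itv `]-oo, c]).
  rewrite setTI; congr measurable; apply/seteqP; split=> x /=; rewrite in_itv //.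
have mg : measurable_fun setT g.
  by apply: measurable_funM => //; exact: measurable_indic.
have tE k : trunc_var (X k) n s = g \o X k.
  apply/funext => w; rewrite /trunc_var /g /= indicE; case: ifP => H.
    by rewrite mem_set ?mulr1.
  by rewrite memNset ?mulr0 // => H'; rewrite H' in H.
have key k : ('E_P[g \o X k])%E = (\int[pushforward P (X k)]_(y in setT) (EFin \o g) y)%E.
  rewrite expectation.unlock (integral_pushforward (mX k)) //.
    exact/measurable_EFinP.
  rewrite preimage_setT.
  apply: (le_integrable measurableT _ _ (finite_measure_integrable_cst P `|c| measurableT)).
    apply/measurable_EFinP; exact: measurableT_comp mg (mX k).
  move=> x _ /=; rewrite lee_fin normr_id /g indicE.
  case: (pselect (`|X k x| <= c)) => H.
    by rewrite mem_set // mulr1; apply: le_trans H _; exact: ler_norm.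
  by rewrite memNset // mulr0 normr0.
rewrite !tE !key; apply: eq_measure_integral => A mA' _.
exact: iid.
Qed.

Theorem lemma2p2 (d : measure_display) (T : measurableType d) (R : realType)
  (P : probability T R) (X : nat -> T -> R) (delta : R) :
  (forall j, measurable_fun setT (X j)) ->
  mutually_independent P X ->
  identically_distributed P X ->
  non_degenerate P (X 0%N) ->
  ('E_P[X 0%N] = 0)%E ->
  ('E_P[(fun w => X 0%N w ^+ 2)%R] = 1)%E ->
  0 < delta ->
  ('E_P[(fun w => `|X 0%N w| `^ (2 + delta))%R] < +oo)%E ->
  {ae P, forall w, max_dev P X (2 + delta) n w @[n --> \oo] --> (0 : R)}.
Proof.
move=> mX _ iid _ _ _ d0 Efin.
have s0 : 0 < 2 + delta by rewrite addr_gt0.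
set s := 2 + delta in s0 Efin *.
set h : R -> R := fun x => `|x| `^ s.
have mh : measurable_fun setT h.
  exact: (measurableT_comp (measurable_realfun.measurable_powR s) (@measurable_realfun.normr_measurable R setT)).
set B : nat -> set R := fun j => [set x | j.+1%:R < h x].
have mB j : measurable (B j).
  have := mh measurableT _ (measurable_itv `]j.+1%:R, +oo[); rewrite setTI.
  congr measurable; apply/seteqP; split => x /=; rewrite in_itv /= andbT //.
set E : nat -> set T := fun j => X j @^-1` B j.
have mE j : measurable (E j) by have := mX j measurableT _ (mB j); rewrite setTI.
have mE0 j : measurable (X 0%N @^-1` B j) by have := mX 0%N measurableT _ (mB j); rewrite setTI.
have sumfin : (\sum_(n <oo) P (E n) < +oo)%E.
  apply: (le_lt_trans _ Efin).
  apply: lime_le; first by apply: is_cvg_nneseries => *; exact: measure_ge0.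
  apply: nearW => N.
  rewrite (eq_bigr (fun j => \int[P]_x (\1_(X 0%N @^-1` B j) x)%:E)%E); last first.
    by move=> j _; rewrite /E iid // integral_indic // setIT.
  rewrite big_mkord -(ge0_integral_sum P measurableT
    (f := fun (j : 'I_N) x => (\1_(X 0%N @^-1` B j) x)%:E)); last 2 first.
    - by move=> j; apply/measurable_EFinP; exact: measurable_indic.
    - by move=> j x _; rewrite lee_fin.
  rewrite expectation.unlock; apply: ge0_le_integral => //.
  - by move=> x _; rewrite sume_ge0 // => j _; rewrite lee_fin.
  - apply: (@emeasurable_sum _ _ _ setT 'I_N _ (fun (j : 'I_N) x => (\1_(X 0%N @^-1` B j) x)%:E)) => j.
    apply/measurable_EFinP; exact: measurable_indic.
  - apply/measurable_EFinP; exact: (measurableT_comp mh (mX 0%N)).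
  - move=> x _; rewrite sumEFin lee_fin.
    apply: (@count_le R T x _ N (fun j => X 0%N @^-1` B j)); last exact: powR_ge0.
    by move=> j.
have P0 := @lim_sup_set_cvg0 d T R P E mE sumfin.
exists (lim_sup_set E); split => //.
  by apply: bigcap_measurable => // k _; apply: bigcup_measurable => j _.
move=> w /= Hw; apply: contrapT => Hn; apply: Hw.
have [m Hm] : exists m, forall j, (m <= j)%N -> ~ E j w.
  apply: contrapT => H; apply: Hn => n _.
  apply: contrapT => H2; apply: H; exists n => j nj Ej; apply: H2; exists j => //.
set M := \sum_(j < m) h (X j w).
have Hh n j : (maxn m (Num.truncn M).+1 <= n)%N -> (j < n)%N -> h (X j w) <= n%:R.
  move=> Nn jn.
  have Hn1 := leq_trans (leq_maxr _ _) Nn.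
  have Hm1 := leq_trans (leq_maxl _ _) Nn.
  case: (ltnP j m) => jm.
  - apply: (@le_trans _ _ M).
      rewrite /M (bigD1 (Ordinal jm)) //= lerDl sumr_ge0 // => i _.
      exact: powR_ge0.
    apply: le_trans (ltW (truncnS_gt M)) _.
    by rewrite ler_nat.
  - have := Hm j jm; rewrite /E /B /= => H.
    have : ~~ (j.+1%:R < h (X j w)) by apply/negP.
    rewrite -leNgt => H'; apply: le_trans H' _; rewrite ler_nat //.
apply: cvg_near_cst.
exists (maxn m (Num.truncn M).+1) => // n /= Nn.
set c := fine ('E_P[trunc_var (X 0%N) n s])%E.
have Htr j : (j < n)%N -> xi_tilde P X s n j w = X j w - c.
  move=> jn; rewrite /xi_tilde (@exp_trunc _ _ _ P X mX iid) /trunc_var ifT //.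
  have H := Hh n j Nn jn.
  have -> : `|X j w| = (`|X j w| `^ s) `^ s^-1.
    by rewrite -powRrM mulfV ?gt_eqF // powRr1.
  apply: ge0_ler_powR => //; first by rewrite invr_ge0 ltW.
    by rewrite nnegrE powR_ge0.
  by rewrite nnegrE ler0n.
rewrite /max_dev big_nat_cond.
apply: (big_ind (fun x => x = 0)) => //.
  by move=> x y -> ->; rewrite maxxx.
move=> k /andP[/andP[k1 kn] _].
apply/eqP; rewrite normr_eq0 subr_eq0; apply/eqP.
have [Hc Hs] := @trig_sums R n k k1 kn.
rewrite /dft_abs; congr (Num.sqrt (_ ^+ 2 + _ ^+ 2)).
- rewrite [RHS](eq_bigr (fun j : 'I_n => (X j w - c) * cos (2 * pi * (k * j)%:R / n%:R))); last first.
    by move=> j _; rewrite Htr.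
  under [RHS]eq_bigr => j _ do rewrite mulrBl.
  by rewrite sumrB -mulr_sumr Hc mulr0 subr0.
- rewrite [RHS](eq_bigr (fun j : 'I_n => (X j w - c) * sin (2 * pi * (k * j)%:R / n%:R))); last first.
    by move=> j _; rewrite Htr.
  under [RHS]eq_bigr => j _ do rewrite mulrBl.
  by rewrite sumrB -mulr_sumr Hs mulr0 subr0.
Qed.
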